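(* Let $q$ be a prime power and let $n_1,n_2$ be coprime odd positive integers, each coprime to $q$. If every irreducible monic factor of $x^{n_1}-1$ in $\mathbb{F}_{q^2}[x]$ is SCRIM and $x-1$ is the only SCRIM factor of $x^{n_2}-1$ in $\mathbb{F}_{q^2}[x]$, then $|\Omega_{q^2,n_1n_2}|=|\Omega_{q^2,n_1}|$.
   Context: $\mathbb{F}_{q^2}$ is the finite field with $q^2$ elements. For $\alpha\in\mathbb{F}_{q^2}$ put $\bar\alpha=\alpha^q$, and for $f(x)=\sum_i f_ix^i$ put $\overline{f(x)}=\sum_i \bar f_i x^i$. For $f(x)$ with $f(0)\neq 0$, $f^*(x)=x^{\deg f}f(0)^{-1}f(1/x)$ and $f^\dagger(x)=\overline{f^*(x)}$. A polynomial is SCRIM if it is monic, irreducible over $\mathbb{F}_{q^2}$, has nonzero constant term, and satisfies $f=f^\dagger$. $\Omega_{q^2,n}$ denotes the set of SCRIM polynomials in $\mathbb{F}_{q^2}[x]$ dividing $x^n-1$. *)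

(* Defs.v *)
From HB Require Import structures.
From mathcomp Require Import all_boot all_order all_algebra.
From mathcomp Require Import boolp.
Set Implicit Arguments. Unset Strict Implicit. Unset Printing Implicit Defensive.
Import GRing.Theory.
Local Open Scope ring_scope.

Section Scrim.
Variables (F : finFieldType) (q : nat).

Definition conjq (a : F) : F := a ^+ q.
Definition conj_poly (f : {poly F}) : {poly F} := map_poly conjq f.

(* f^*(x) = x^{deg f} f(0)^{-1} f(1/x): the coefficient of x^i is
   f(0)^{-1} * f_{deg f - i} *)
Definition recip (f : {poly F}) : {poly F} :=
  (f`_0)^-1 *: \poly_(i < size f) f`_((size f).-1 - i).

Definition dagger (f : {poly F}) : {poly F} := conj_poly (recip f).

Definition SCRIM (f : {poly F}) : Prop :=
  [/\ f \is monic, irreducible_poly f, f`_0 != 0 & f = dagger f].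

(* Omega_{q^2,n}: SCRIM polynomials dividing x^n - 1.  For n >= 1 every
   divisor of x^n - 1 has size <= n+1, so they all live in {poly_(n.+1) F}. *)
Definition Omega (n : nat) : {set {poly_(n.+1) F}} :=
  [set p : {poly_(n.+1) F} | `[< SCRIM (p : {poly F}) >] && ((p : {poly F}) %| 'X^n - 1)].

End Scrim.

(* Main.v *)
Require Import Defs.
From HB Require Import structures.
From mathcomp Require Import all_boot all_order all_algebra all_field fraction.
From mathcomp Require Import boolp.
From mathcomp Require Import zify.
Import GRing.Theory.
Local Open Scope ring_scope.


Lemma aux1 (a b : nat) : (a < b)%N -> (b.-1 - (b - a.+1) = a)%N.
Proof. by case: b => [|b] //= hab; lia. Qed.
Lemma aux2 (a b : nat) : (a < b)%N -> (b.-1 = (b - a.+1) + a)%N.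
Proof. by case: b => [|b] //= hab; lia. Qed.

Section Rev.
Variable F : fieldType.

Definition rv (h : {poly F}) : {poly F} := \poly_(i < size h) h`_((size h).-1 - i).

Lemma rv_horner (K : fieldType) (phi : {rmorphism F -> K}) (h : {poly F}) (y : K) :
  y != 0 ->
  (map_poly phi (rv h)).[y] = y ^+ (size h).-1 * (map_poly phi h).[y^-1].
Proof.
move=> y0.
rewrite (@horner_coef_wide _ (size h)); last by rewrite size_map_poly size_poly.
rewrite (@horner_coef_wide _ (size h)); last by rewrite size_map_poly.
rewrite mulr_sumr (reindex_inj rev_ord_inj) /=.
apply: eq_bigr => i _.
rewrite !coef_map coef_poly /=.
have hi := ltn_ord i.
rewrite ifT; last by rewrite -?subn1; lia.
have -> : ((size h).-1 - (size h - i.+1) = i)%N.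
  by apply: aux1.
rewrite mulrCA; congr (_ * _).
have -> : ((size h).-1 = (size h - i.+1) + i)%N.
  by apply: aux2.
by rewrite exprD exprVn mulfK // expf_neq0.
Qed.

Lemma map_comp_Xn (K : fieldType) (phi : {rmorphism F -> K}) (p : {poly F}) k (z : K) :
  (map_poly phi (p \Po 'X^k)).[z] = (map_poly phi p).[z ^+ k].
Proof. by rewrite map_comp_poly map_polyXn horner_comp hornerXn. Qed.

Let K := {fraction {poly F}}.
Let phi : {rmorphism F -> K} := ((@tofrac {poly F}) \o (@polyC F)).
Let y : K := tofrac 'X.

Lemma tofrac_horner (p : {poly F}) : (map_poly phi p).[y] = tofrac p.
Proof.
rewrite map_poly_comp /y horner_map /=.
by have := comp_polyXr p; rewrite /comp_poly => ->.
Qed.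

Lemma y_neq0 : y != 0.
Proof. by rewrite tofrac_eq0 polyX_eq0. Qed.

Lemma rvM (a b : {poly F}) : a != 0 -> b != 0 -> rv (a * b) = rv a * rv b.
Proof.
move=> a0 b0; apply/eqP; rewrite -tofrac_eq; apply/eqP.
rewrite tofracM -!tofrac_horner.
rewrite !(@rv_horner K phi) ?y_neq0 //.
rewrite rmorphM hornerM size_mul //.
have sa : (0 < size a)%N by rewrite size_poly_gt0.
have sb : (0 < size b)%N by rewrite size_poly_gt0.
have -> : ((size a + size b).-1.-1 = (size a).-1 + (size b).-1)%N.
  by move: sa sb; case: (size a) => [|u] //; case: (size b) => [|v] //= _ _; lia.
by rewrite exprD mulrACA.
Qed.

Lemma rv_comp (g : {poly F}) (k : nat) : (0 < k)%N -> g != 0 ->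
  rv (g \Po 'X^k) = rv g \Po 'X^k.
Proof.
move=> k0 g0; apply/eqP; rewrite -tofrac_eq; apply/eqP.
rewrite -!tofrac_horner.
rewrite (@rv_horner K phi _ y) ?y_neq0 //.
rewrite !(@map_comp_Xn K phi).
rewrite (@rv_horner K phi _ (y ^+ k)) ?expf_neq0 ?y_neq0 //.
by rewrite size_comp_poly size_polyXn /= -exprVn -exprM mulnC.
Qed.
End Rev.
Arguments rv {F} h.
Arguments rvM {F}.
Arguments rv_comp {F}.


Section PolyGen.
Variable F : fieldType.

Lemma irr_coprime (f a : {poly F}) : irreducible_poly f -> ~~ (f %| a) -> coprimep f a.
Proof.
move=> irr nd; have [h|h] := irredp_XsubCP irr (dvdp_gcdl f a).
  by rewrite coprimep_def size_poly_eq1.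
by move/negP: nd; case; rewrite -(eqp_dvdl _ h) dvdp_gcdr.
Qed.

Lemma irr_prime (f a b : {poly F}) : irreducible_poly f -> f %| a * b -> (f %| a) || (f %| b).
Proof.
move=> irr h; case fa: (f %| a) => //=.
by rewrite -(Gauss_dvdpr _ (irr_coprime _ _ irr (negbT fa))).
Qed.

Lemma compXn_l n (p : {poly F}) : 'X^n \Po p = p ^+ n.
Proof.
elim: n => [|n IH]; first by rewrite expr0 -polyC1 comp_polyC.
by rewrite !exprS comp_polyM comp_polyX IH.
Qed.

Lemma comp1 (p : {poly F}) : 1 \Po p = 1.
Proof. by rewrite -polyC1 comp_polyC. Qed.

Lemma XsubXn m a : ('X^m - 1 : {poly F}) %| 'X^(m * a) - 1.
Proof.
have h : ('X - 1 : {poly F}) %| 'X^a - 1.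
  by rewrite -polyC1 dvdp_XsubCl /root !hornerE expr1n subrr.
have := dvdp_comp_poly ('X^m) h.
by rewrite !comp_polyB compXn_l comp_polyX !comp1 -exprM.
Qed.

Lemma exists_irr (f h : {poly F}) k : irreducible_poly f -> forall m (g : {poly F}),
  (size g <= m)%N -> g \is monic -> g %| h -> f %| g \Po 'X^k ->
  exists g', [/\ g' \is monic, irreducible_poly g', g' %| h & f %| g' \Po 'X^k].
Proof.
move=> irr; elim=> [|m IH] g sg mg gh fg.
  by move: sg; rewrite leqn0 size_poly_eq0 (negPf (monic_neq0 mg)).
have [ig|ig] := pselect (irreducible_poly g); first by exists g.
have g0 := monic_neq0 mg.
have sg1 : (1 < size g)%N.
  rewrite ltnNge; apply/negP => s1.
  have H : (0 < size g)%N by rewrite size_poly_gt0.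
  have : size g == 1%N by apply/eqP; lia.
  move/size_poly1P => [c c0 gc].
  have c1 : c = 1 by move: mg; rewrite gc monicE lead_coefC => /eqP.
  move: fg; rewrite gc c1 comp_polyC dvdp1 => /eqP fs.
  by have := irr.1; rewrite fs.
have [d [sd dg nd]] : exists d : {poly F}, [/\ size d != 1%N, d %| g & ~~ (d %= g)].
  apply: boolp.contrapT => H; apply: ig; split => // d sd dg.
  case: (boolP (d %= g)) => // nd; exfalso; apply: H; by exists d.
have [r hr] : exists r : {poly F}, g = r * d by apply/dvdpP.
have d0 : d != 0 by apply: contraNneq g0 => d0; rewrite hr d0 mulr0.
have r0 : r != 0 by apply: contraNneq g0 => r0; rewrite hr r0 mul0r.
have sd2 : (1 < size d)%N.
  have H : (0 < size d)%N by rewrite size_poly_gt0.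
  by move/eqP: sd; lia.
have sdg : (size d < size g)%N.
  rewrite ltn_neqAle dvdp_leq // andbT (dvdp_size_eqp dg); exact: nd.
have srg : (size r < size g)%N.
  have H : (0 < size r)%N by rewrite size_poly_gt0.
  rewrite hr size_mul // -subn1 -addnBA; last exact: ltnW sd2.
  by rewrite -{1}[size r]addn0 ltn_add2l subn_gt0.
have key : forall p, p != 0 -> p %| g -> (size p < size g)%N -> f %| p \Po 'X^k ->
    exists g', [/\ g' \is monic, irreducible_poly g', g' %| h & f %| g' \Po 'X^k].
  move=> p p0 pg sp fp; have l0 : (lead_coef p)^-1 != 0 by rewrite invr_eq0 lead_coef_eq0.
  apply: (IH ((lead_coef p)^-1 *: p)).
  - by rewrite size_scale //; lia.
  - by rewrite monicE lead_coefZ mulVf ?lead_coef_eq0.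
  - by rewrite dvdpZl //; exact: dvdp_trans pg gh.
  - by rewrite comp_polyZ dvdpZr.
move: fg; rewrite hr comp_polyM => /(irr_prime _ _ _ irr) /orP [fr|fd].
  by apply: (key r) => //; rewrite hr dvdp_mulIl.
exact: (key d).
Qed.
End PolyGen.
Arguments irr_coprime {F f a}.
Arguments exists_irr {F f h k}.


Section Conj.
Variables (F : finFieldType) (q : nat).
Hypothesis hq : [pchar F].-nat q.

Lemma conjq_zmod : zmod_morphism (@conjq F q).
Proof.
move=> a b; rewrite /conjq.
by apply/eqP; rewrite eq_sym subr_eq -exprDn_pchar // subrK.
Qed.

Lemma conjq_monoid : monoid_morphism (@conjq F q).
Proof. by split; [rewrite /conjq expr1n | move=> a b; rewrite /conjq exprMn]. Qed.

HB.instance Definition _ := GRing.isZmodMorphism.Build F F (@conjq F q) conjq_zmod.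
HB.instance Definition _ := GRing.isMonoidMorphism.Build F F (@conjq F q) conjq_monoid.

Definition conjR : {rmorphism F -> F} := @conjq F q.

Lemma recipE (h : {poly F}) : recip h = (h`_0)^-1 *: rv h.
Proof. by []. Qed.

Lemma daggerE (h : {poly F}) : dagger q h = map_poly conjR (recip h).
Proof. by []. Qed.

Lemma daggerM (a b : {poly F}) : a != 0 -> b != 0 -> dagger q (a * b) = dagger q a * dagger q b.
Proof.
move=> a0 b0; rewrite !daggerE -rmorphM; congr map_poly.
by rewrite !recipE rvM // coef0M invfM -!mul_polyC polyCM mulrACA.
Qed.

Lemma coef0_compXn (g : {poly F}) k : (0 < k)%N -> (g \Po 'X^k)`_0 = g`_0.
Proof. by move=> k0; rewrite coef_comp_poly_Xn // dvdn0 div0n. Qed.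

Lemma dagger_comp (g : {poly F}) k : (0 < k)%N -> g != 0 ->
  dagger q (g \Po 'X^k) = dagger q g \Po 'X^k.
Proof.
move=> k0 g0; rewrite !daggerE.
have -> : recip (g \Po 'X^k) = recip g \Po 'X^k.
  by rewrite !recipE rv_comp // coef0_compXn // comp_polyZ.
by rewrite (map_comp_poly conjR) (map_polyXn conjR).
Qed.

Lemma dagger_dvd (a b : {poly F}) : b != 0 -> a %| b -> dagger q a %| dagger q b.
Proof.
move=> b0 /dvdpP [m hm]; rewrite hm in b0 *.
have m0 : m != 0 by apply: contraNneq b0 => ->; rewrite mul0r.
have a0 : a != 0 by apply: contraNneq b0 => ->; rewrite mulr0.
by rewrite daggerM // dvdp_mull.
Qed.

Lemma dagger_monic (g : {poly F}) : g`_0 != 0 -> dagger q g \is monic /\ size (dagger q g) = size g.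
Proof.
move=> g0.
have sg : (0 < size g)%N.
  by rewrite size_poly_gt0; apply: contraNneq g0 => ->; rewrite coef0.
have E : ((size g).-1 - (size g).-1 = 0)%N by rewrite subnn.
have srv : size (rv g) = size g by rewrite /rv size_poly_eq // E.
have lrv : lead_coef (rv g) = g`_0 by rewrite /rv lead_coef_poly // E.
have mr : recip g \is monic.
  by rewrite recipE monicE lead_coefZ lrv mulVf.
have sr : size (recip g) = size g by rewrite recipE size_scale ?invr_eq0.
by rewrite daggerE size_map_poly sr monic_map.
Qed.

Lemma main_div (n1 n2 : nat) (f : {poly F}) : (0 < n1)%N -> (0 < n2)%N -> coprime n1 n2 ->
  (forall g : {poly F}, @SCRIM F q g -> g %| 'X^n2 - 1 -> g = 'X - 1) ->
  @SCRIM F q f -> f %| 'X^(n1 * n2) - 1 -> f %| 'X^n1 - 1.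
Proof.
move=> hn1 hn2 hcop honly [mf irf f0 fd] fdiv.
case: (egcdnP n2 hn1) => km kn E _; rewrite (eqP hcop) in E.
set k := (km * n1)%N.
have k0 : (0 < k)%N by rewrite /k E addn1.
have h1 : f %| ('X^n2 - 1) \Po 'X^k.
  rewrite comp_polyB compXn_l comp1 -exprM.
  have -> : (k * n2 = n1 * n2 * km)%N by rewrite /k; lia.
  exact: dvdp_trans fdiv (XsubXn _ _ _).
have [g [mg ig gh fg]] := exists_irr irf _ _ (leqnn _) (monic_Xn_sub_1 _ hn2) (dvdpp _) h1.
have g0' : g`_0 != 0.
  apply/negP => /eqP z; case/dvdpP: gh => m hm.
  have := congr1 (horner^~ 0) hm; rewrite hornerM (horner_coef0 g) z mulr0.
  rewrite !hornerE expr0n gtn_eqF //= sub0r => /eqP; by rewrite oppr_eq0 oner_eq0.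
have gk0 : g \Po 'X^k != 0.
  by apply: contraNneq g0' => e; rewrite -(@coef0_compXn g k k0) e coef0.
have dg : dagger q g = g.
  have [mdg sdg] := dagger_monic _ g0'.
  have fdg : f %| dagger q g \Po 'X^k.
    rewrite -dagger_comp ?monic_neq0 // fd; exact: dagger_dvd.
  have gdg : g %| dagger q g.
    apply/negPn/negP => ngd; have cp := coprimep_comp_poly ('X^k) (irr_coprime ig ngd).
    have : f %| gcdp (g \Po 'X^k) (dagger q g \Po 'X^k) by rewrite dvdp_gcd fg fdg.
    move: cp; rewrite coprimep_def size_poly_eq1 => /eqp_dvdr ->; rewrite dvdp1 => /eqP fs.
    by have := irf.1; rewrite fs.
  apply/eqP; rewrite -(eqp_monic mdg mg) eqp_sym -(dvdp_size_eqp gdg) sdg.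
  done.
have gX : g = 'X - 1 by apply: honly => //; split.
move: fg; rewrite gX comp_polyB comp_polyX comp1 => fk.
have h2 : f %| 'X^(k * n1) - 1 := dvdp_trans fk (XsubXn _ k n1).
have h3 : f %| 'X^(n1 * n2 * kn) - 1 := dvdp_trans fdiv (XsubXn _ _ kn).
have ekn : (k * n1 = n1 + n1 * n2 * kn)%N by rewrite /k E; lia.
move: h2; rewrite ekn exprD.
have -> : 'X^n1 * 'X^(n1 * n2 * kn) - 1 = 'X^n1 * ('X^(n1 * n2 * kn) - 1) + ('X^n1 - 1 : {poly F}).
  by rewrite mulrBr mulr1 addrA subrK.
by rewrite dvdp_addr //; apply: dvdp_mull.
Qed.
End Conj.

Theorem theorem2p11 (F : finFieldType) (q : nat)
  (hq : exists p k : nat, [/\ prime p, (0 < k)%N & q = (p ^ k)%N])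
  (hF : #|F| = (q ^ 2)%N)
  (n1 n2 : nat)
  (hn1 : (0 < n1)%N) (hn2 : (0 < n2)%N)
  (hodd1 : odd n1) (hodd2 : odd n2)
  (hcop : coprime n1 n2) (hcop1 : coprime n1 q) (hcop2 : coprime n2 q)
  (hall : forall f : {poly F}, f \is monic -> irreducible_poly f ->
            f %| 'X^n1 - 1 -> @SCRIM F q f)
  (honly : forall f : {poly F}, @SCRIM F q f -> f %| 'X^n2 - 1 -> f = 'X - 1) :
  #|@Omega F q (n1 * n2)| = #|@Omega F q n1|.
Proof.
have hch : [pchar F].-nat q.
  case: hq => p [k [pp k0 eq]]; rewrite eq.
  have pc : p \in [pchar F].
    by apply: (@card_finPcharP F p (k * 2)); rewrite // hF eq -expnM.
  by rewrite pnatX pnatE // pc.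
pose wid (p : {poly_(n1.+1) F}) : {poly_((n1 * n2).+1) F} :=
  insubd (0 : {poly_((n1 * n2).+1) F}) (val p).
have vw : forall p, val (wid p) = val p.
  move=> p; rewrite /wid val_insubd ifT //.
  apply: leq_trans (size_npoly p) _; rewrite ltnS leq_pmulr //.
have X0 : ('X^n1 - 1 : {poly F}) != 0 by rewrite -size_poly_gt0 size_Xn_sub_1.
have E : @Omega F q (n1 * n2) = wid @: @Omega F q n1.
  apply/setP => b; rewrite inE; apply/idP/imsetP.
  - case/andP => /asboolP sc dv.
    have dv1 := @main_div F q hch n1 n2 _ hn1 hn2 hcop honly sc dv.
    have sb : (size (val b) <= n1.+1)%N.
      by rewrite -(size_Xn_sub_1 F hn1); apply: dvdp_leq.
    exists (insubd (0 : {poly_(n1.+1) F}) (val b)).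
      rewrite inE val_insubd ifT //; apply/andP; split => //; exact/asboolP.
    by apply: val_inj; rewrite vw val_insubd ifT.
  - case=> a; rewrite inE => /andP [/asboolP sc dv] ->.
    rewrite vw; apply/andP; split; first exact/asboolP.
    exact: dvdp_trans dv (XsubXn _ _ _).
rewrite E card_in_imset // => x y _ _ /(congr1 val); rewrite !vw; exact: val_inj.
Qed.
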